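(* For every (nonempty) composition $\alpha$, the monomial quasi-symmetric function $M_\alpha$ is irreducible both in $\mathrm{QSym}$ and in $K=\mathbb Z[[x_1,x_2,\dots]]$ (power series of bounded degree).
   Context: For a composition $\alpha=(\alpha_1,\dots,\alpha_k)$ (positive integers), $M_\alpha=\sum_{i_1<\dots<i_k}x_{i_1}^{\alpha_1}\cdots x_{i_k}^{\alpha_k}$. $\mathrm{QSym}\subseteq K$ is the ring of quasi-symmetric functions (bounded-degree series whose coefficient of $x_{i_1}^{a_1}\cdots x_{i_k}^{a_k}$ depends only on $(a_1,\dots,a_k)$ for $i_1<\dots<i_k$). The units of $K$ and of $\mathrm{QSym}$ are $\pm1$. *)

(* Defs.v *)
From mathcomp Require Import all_boot all_algebra.
Set Implicit Arguments. Unset Strict Implicit. Unset Printing Implicit Defensive.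
Import GRing.Theory.
Local Open Scope ring_scope.

(* A monomial x_1^{s_0} x_2^{s_1} ... is represented by its exponent list
   s : seq nat (trailing zeros allowed; s and rcons s 0 denote the same
   monomial). *)
Definition series := seq nat -> int.

Definition wf_series (f : series) : Prop := forall s, f (rcons s 0%N) = f s.

Definition bounded_deg (f : series) : Prop :=
  exists d : nat, forall s, (d < sumn s)%N -> f s = 0.

Definition inK (f : series) : Prop := wf_series f /\ bounded_deg f.

Fixpoint divs (s : seq nat) : seq (seq nat) :=
  match s with
  | [::] => [:: [::]]
  | a :: s' => [seq i :: t | i <- iota 0 a.+1, t <- divs s']
  end.

Definition subm (s t : seq nat) : seq nat := [seq (x.1 - x.2)%N | x <- zip s t].

Definition mulS (f g : series) : series :=
  fun s => \sum_(t <- divs s) f t * g (subm s t).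

Definition oneS : series := fun s => if sumn s == 0%N then 1 else 0.

Definition compo (s : seq nat) : seq nat := [seq a <- s | a != 0%N].

Definition quasisym (f : series) : Prop :=
  forall s t, compo s = compo t -> f s = f t.

Definition inQSym (f : series) : Prop := inK f /\ quasisym f.

Definition Mqs (alpha : seq nat) : series :=
  fun s => if compo s == alpha then 1 else 0.

Definition is_composition (alpha : seq nat) : bool :=
  (alpha != [::]) && all (fun a => 0 < a)%N alpha.

Definition unit_in (P : series -> Prop) (f : series) : Prop :=
  exists g, P g /\ forall s, mulS f g s = oneS s.

Definition irreducible_in (P : series -> Prop) (f : series) : Prop :=
  [/\ P f, (exists s, f s != 0), ~ unit_in P f &
      forall g h, P g -> P h -> (forall s, mulS g h s = f s) ->
        unit_in P g \/ unit_in P h].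

(* Main.v *)
Require Import Defs.
From mathcomp Require Import all_boot all_algebra.
From mathcomp Require Import zify ring.
From Stdlib Require Import FunctionalExtensionality.
Set Implicit Arguments. Unset Strict Implicit. Unset Printing Implicit Defensive.
Import GRing.Theory.
Local Open Scope ring_scope.

Definition slice (f : series) (i : nat) : series := fun m => f (i :: m).
Definition degle (f : series) (d : nat) := forall m, (d < sumn m)%N -> f m = 0.
Definition homog (f : series) (d : nat) := forall m, f m != 0 -> sumn m = d.
Definition hom (d : nat) (f : series) : series :=
  fun m => if sumn m == d then f m else 0.

Section Ev.
Variable R : comNzRingType.

Fixpoint ev (D : nat) (cs : seq R) (f : series) : R :=
  match cs with
  | [::] => (f [::])%:~R
  | c :: cs' => \sum_(i < D.+1) c ^+ i * ev D cs' (slice f i)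
  end.

Lemma ev0 D cs f : (forall m, f m = 0) -> ev D cs f = 0.
Proof.
elim: cs f => [|c cs IH] f f0 /=; first by rewrite f0.
by apply: big1 => i _; rewrite IH ?mulr0 // => m; apply: f0.
Qed.

Lemma ev_sum D cs J (F : nat -> series) :
  ev D cs (fun m => \sum_(j < J) F j m) = \sum_(j < J) ev D cs (F j).
Proof.
elim: cs F => [|c cs IH] F /=; first by rewrite rmorph_sum.
rewrite exchange_big /=; apply: eq_bigr => i _.
rewrite /slice (IH (fun (j : nat) (m : seq nat) => F j (nat_of_ord i :: m))) mulr_sumr.
by apply: eq_bigr.
Qed.

Lemma degle_slice f d j : degle f d -> degle (slice f j) (d - j).
Proof. move=> H m lt; apply: H => /=; lia. Qed.

Lemma slice0 f d j : degle f d -> (d < j)%N -> forall m, slice f j m = 0.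
Proof. move=> H lt m; apply: H => /=; lia. Qed.

Lemma mulS_nil f g : mulS f g [::] = f [::] * g [::].
Proof. by rewrite /mulS /= big_seq1. Qed.

Lemma mulS_cons f g i m :
  mulS f g (i :: m) = \sum_(j < i.+1) mulS (slice f j) (slice g (i - j)) m.
Proof.
rewrite /mulS.
have -> : divs (i :: m) = [seq j :: t | j <- iota 0 i.+1, t <- divs m] by [].
rewrite big_allpairs_dep.
have -> : iota 0 i.+1 = index_iota 0 i.+1 by rewrite /index_iota subn0.
by rewrite big_mkord.
Qed.


Lemma ev_mul D cs f g df dg : degle f df -> degle g dg -> (df + dg <= D)%N ->
  ev D cs (mulS f g) = ev D cs f * ev D cs g.
Proof.
elim: cs f g df dg => [|c cs IH] f g df dg Hf Hg HD /=.
  by rewrite mulS_nil rmorphM.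
pose A := fun j => ev D cs (slice f j).
pose B := fun l => ev D cs (slice g l).
have AB0 : forall j l, (D < j + l)%N -> A j * B l = 0.
  move=> j l lt; case: (ltnP df j) => hj.
    by rewrite /A (ev0 _ _ (slice0 Hf hj)) mul0r.
  have hl : (dg < l)%N by lia.
  by rewrite /B (ev0 _ _ (slice0 Hg hl)) mulr0.
have LHS : forall i, ev D cs (slice (mulS f g) i) = \sum_(j < i.+1) A j * B (i - j)%N.
  move=> i.
  have -> : slice (mulS f g) i =
      fun m => \sum_(j < i.+1) mulS (slice f j) (slice g (i - j)) m.
    by apply: functional_extensionality => m; rewrite /slice mulS_cons.
  rewrite (ev_sum D cs i.+1 (fun (j : nat) m => mulS (slice f j) (slice g (i - j)) m)).
  apply: eq_bigr => j _.
  apply: (IH _ _ (df - j)%N (dg - (i - j))%N);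
    [exact: degle_slice|exact: degle_slice| lia].
pose PA := \poly_(j < D.+1) A j.
pose PB := \poly_(j < D.+1) B j.
have EA : \sum_(i < D.+1) c ^+ i * ev D cs (slice f i) = PA.[c].
  by rewrite horner_poly; apply: eq_bigr => i _; rewrite mulrC.
have EB : \sum_(i < D.+1) c ^+ i * ev D cs (slice g i) = PB.[c].
  by rewrite horner_poly; apply: eq_bigr => i _; rewrite mulrC.
rewrite EA EB -hornerM.
have Hsz : (size (PA * PB)%R <= D.+1)%N.
  apply/leq_sizeP => i Hi; rewrite coefM; apply: big1 => j _.
  rewrite !coef_poly; case: ifP => h1; case: ifP => h2; rewrite ?mul0r ?mulr0 //.
  apply: AB0; have := ltn_ord j; lia.
rewrite (horner_coef_wide c Hsz); apply: eq_bigr => i _.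
rewrite (LHS i) coefM mulrC; congr (_ * _); apply: eq_bigr => j _.
have := ltn_ord i; have := ltn_ord j => h1 h2.
by rewrite !coef_poly ifT ?ifT //; lia.
Qed.


Lemma ev_scale D cs (l : R) f d : homog f d ->
  ev D (map (fun c => l * c) cs) f = l ^+ d * ev D cs f.
Proof.
elim: cs f d => [|c cs IH] f d Hf /=.
  case: (eqVneq (f [::]) 0) => [->|nz]; first by rewrite mulr0.
  by rewrite -(Hf _ nz) expr0 mul1r.
rewrite mulr_sumr; apply: eq_bigr => i _.
case: (leqP i d) => hi.
  rewrite (IH _ (d - i)%N); last first.
    by move=> m nz; have /= := Hf _ nz; lia.
  by rewrite exprMn -{2}(subnK hi) exprD; ring.
have z : forall m, slice f i m = 0.
  move=> m; apply/eqP; apply: contraT => nz; have /= := Hf _ nz; lia.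
by rewrite !(ev0 _ _ z) !mulr0.
Qed.

Lemma ev_decomp D cs f B : (forall m, (B <= sumn m)%N -> f m = 0) ->
  ev D cs f = \sum_(d < B) ev D cs (hom d f).
Proof.
move=> Hf; rewrite -(ev_sum D cs B (fun d => hom d f)); congr ev.
apply: functional_extensionality => m; rewrite /hom.
case: (ltnP (sumn m) B) => h.
  rewrite (bigD1 (Ordinal h)) //= eqxx big1 ?addr0 // => j nj.
  rewrite ifF //; apply: contraNF nj => /eqP e; apply/eqP/val_inj => /=; by rewrite e.
rewrite Hf // big1 // => j _; case: (sumn m =P j) => // e; have := ltn_ord j; lia.
Qed.

Lemma homog_hom d f : homog (hom d f) d.
Proof. by move=> m; rewrite /hom; case: (sumn m =P d) => //; rewrite eqxx. Qed.

Lemma ev_const D cs f (c : int) :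
  (forall m, f m = if sumn m == 0%N then c else 0) -> ev D cs f = c%:~R.
Proof.
elim: cs f => [|x cs IH] f Hf /=; first by rewrite Hf.
rewrite big_ord_recl /= expr0 mul1r (IH _); last by move=> m; rewrite /slice Hf.
rewrite big1 ?addr0 // => i _; rewrite (ev0 _ _ (f:=slice f (bump 0 i))) ?mulr0 //.
by move=> m; rewrite /slice Hf.
Qed.

Lemma Mqs_nil b m : Mqs b (0%N :: m) = Mqs b m.
Proof. by []. Qed.

Lemma ev_M_nil D b : ev D [::] (Mqs b) = (b == [::])%:R.
Proof. by rewrite /= /Mqs /compo /=; case: b. Qed.

Lemma ev_M0 D cs : ev D cs (Mqs [::]) = 1.
Proof.
elim: cs => [|x cs IH] /=; first by [].
rewrite big_ord_recl /= expr0 mul1r.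
have -> : slice (Mqs [::]) 0 = Mqs [::] by [].
rewrite IH big1 ?addr0 // => i _.
rewrite (ev0 _ _ (f:=slice (Mqs [::]) (bump 0 i))) ?mulr0 //.
Qed.

Lemma ev_Mcons D x cs b bs : (0 < b <= D)%N ->
  ev D (x :: cs) (Mqs (b :: bs)) = ev D cs (Mqs (b :: bs)) + x ^+ b * ev D cs (Mqs bs).
Proof.
move=> /andP [b0 bD] /=.
rewrite big_ord_recl /= expr0 mul1r.
have -> : slice (Mqs (b :: bs)) 0 = Mqs (b :: bs) by [].
congr (_ + _).
have hb : (b.-1 < D)%N by lia.
rewrite (bigD1 (Ordinal hb)) //= big1 ?addr0.
  have -> : bump 0 b.-1 = b by rewrite /bump /=; lia.
  congr (_ * ev _ _ _); apply: functional_extensionality => m.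
  by rewrite /slice /Mqs /compo /= (_ : (b != 0%N) = true) ?eqseq_cons ?eqxx //; lia.
move=> i ni; rewrite (ev0 _ _ (f:=slice (Mqs (b :: bs)) (bump 0 i))) ?mulr0 //.
move=> m; rewrite /slice /Mqs /compo /= eqseq_cons.
have -> : (bump 0 i == b) = false.
  apply/negbTE; move: ni; rewrite -val_eqE /= /bump /=; lia.
by [].
Qed.

Lemma ev_Mones D q bs : all (fun b => 0 < b <= D)%N bs ->
  ev D (nseq q 1) (Mqs bs) = ('C(q, size bs))%:R.
Proof.
elim: q bs => [|q IH] [|b bs] Hb.
- by [].
- by [].
- by rewrite ev_M0 bin0.
- case/andP: (Hb) => hb Hb'.
  rewrite [nseq _ _]/= (@ev_Mcons D 1 (nseq q 1) b bs hb) IH // IH // expr1n mul1r binS natrD addrC.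
  done.
Qed.

Lemma ev_Mzeros D j cs bs : all (fun b => 0 < b <= D)%N bs ->
  ev D (nseq j 0 ++ cs) (Mqs bs) = ev D cs (Mqs bs).
Proof.
move=> Hb; elim: j => [|j IH] //.
case: bs Hb IH => [|b bs] Hb IH; first by rewrite !ev_M0.
case/andP: (Hb) => hb _.
rewrite [nseq _ _ ++ _]/= (@ev_Mcons D 0 _ b bs hb) IH expr0n.
by rewrite (_ : (b == 0%N) = false) ?mul0r ?addr0 //; lia.
Qed.

End Ev.

Lemma ev_rmorph (R S : comNzRingType) (phi : {rmorphism R -> S}) D cs f :
  phi (ev D cs f) = ev D (map phi cs) f.
Proof.
elim: cs f => [|c cs IH] f /=; first by rewrite rmorph_int.
rewrite rmorph_sum; apply: eq_bigr => i _; by rewrite rmorphM rmorphXn IH.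
Qed.

Lemma ev_size (R : comNzRingType) D (cs : seq {poly R}) f d :
  all (fun c : {poly R} => size c <= 2)%N cs -> degle f d -> (size (ev D cs f) <= d.+1)%N.
Proof.
elim: cs f d => [|c cs IH] f d Hc Hf /=.
  have -> : ((f [::])%:~R : {poly R}) = ((f [::])%:~R)%:P by rewrite rmorph_int.
  by apply: leq_trans (size_polyC_leq1 _) _.
case/andP: Hc => hc Hc.
apply: (leq_trans (size_sum _ _ _)); apply/bigmax_leqP => i _.
case: (leqP i d) => hi.
  apply: leq_trans (size_mul_leq _ _) _.
  have h1 := size_poly_exp_leq c i.
  have h2 := IH _ _ Hc (@degle_slice f d i Hf).
  have h4 : ((size c).-1 <= 1)%N by lia.
  have h3 : ((size c).-1 * i <= 1 * i)%N := leq_mul h4 (leqnn _).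
  rewrite mul1n in h3.
  move: h1 h2 h3 hi; move: (nat_of_ord i) => j; move: (size (c ^+ j)) (size (ev D cs (slice f j))) ((size c).-1 * j)%N => a b e; lia.
by rewrite (ev0 _ _ (slice0 Hf hi)) mulr0 size_poly0.
Qed.

Lemma exists_nonroot (P : {poly int}) : P != 0 -> exists x : int, P.[x] != 0.
Proof.
move=> nz.
pose rs := [seq (i%:Z) | i <- iota 0 (size P)].
case: (boolP (has (fun x => P.[x] != 0) rs)) => [/hasP [x _ hx]|h]; first by exists x.
exfalso; have : (size rs < size P)%N.
  apply: max_poly_roots => //.
    apply/allP => x xin; apply/rootP; move/hasPn: h => /(_ x xin).
    by rewrite negbK => /eqP.
  by rewrite map_inj_uniq ?iota_uniq // => a b [].
by rewrite size_map size_iota ltnn.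
Qed.

Lemma poly_eq_int (P Q : {poly int}) : (forall x, P.[x] = Q.[x]) -> P = Q.
Proof.
move=> H; apply/eqP; rewrite -subr_eq0; apply/negPn/negP => /exists_nonroot [x].
by rewrite hornerD hornerN H subrr eqxx.
Qed.

Lemma coef_nz_size (R : nzRingType) (P : {poly R}) i : P`_i != 0 -> (i < size P)%N.
Proof. by apply: contraR; rewrite -leqNgt => h; rewrite nth_default. Qed.

Lemma mono_lemma (R : idomainType) (P Q : {poly R}) (C : R) n i j :
  P * Q = C%:P * 'X^n -> P`_i != 0 -> Q`_j != 0 -> (i + j = n)%N.
Proof.
move=> E Pi Qj.
have P0 : P != 0 by apply: contraNneq Pi => ->; rewrite coef0.
have Q0 : Q != 0 by apply: contraNneq Qj => ->; rewrite coef0.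
have PQ0 : P * Q != 0 by rewrite mulf_neq0.
have C0 : C != 0 by apply: contraNneq PQ0 => C0'; rewrite E C0' mul0r.
have top : ((size P).-1 + (size Q).-1 = n)%N.
  have := size_mul P0 Q0; rewrite E size_Cmul // size_polyXn => e.
  have := size_poly_gt0 P; have := size_poly_gt0 Q; rewrite P0 Q0; lia.
have exP : exists k, P`_k != 0 by exists i.
have exQ : exists k, Q`_k != 0 by exists j.
case: (ex_minnP exP) => i0 Pi0 mi0.
case: (ex_minnP exQ) => j0 Qj0 mj0.
have hi0 : (i0 < (i0 + j0).+1)%N by lia.
have low : (P * Q)`_(i0 + j0) = P`_i0 * Q`_j0.
  rewrite coefM (bigD1 (Ordinal hi0)) //= big1 ?addr0 ?addKn // => k nk.
  case: (ltngtP k i0) => h.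
  - have -> : P`_k = 0 by apply/eqP; apply: contraTT h => /mi0; rewrite -leqNgt.
    by rewrite mul0r.
  - have -> : Q`_(i0 + j0 - k) = 0.
      apply/eqP; apply: contraTT h => /mj0 h'; rewrite -leqNgt; move: h' (ltn_ord k); move: (nat_of_ord k) => kk; lia.
    by rewrite mulr0.
  - by move: nk; rewrite -val_eqE /= h eqxx.
have : (P * Q)`_(i0 + j0) != 0 by rewrite low mulf_neq0.
rewrite E coefCM coefXn; case: (i0 + j0 =P n)%N => [e _|ne]; last by rewrite /= mulr0 eqxx.
apply/eqP; rewrite eqn_leq; apply/andP; split.
  rewrite -top; apply: leq_add; rewrite -ltnS prednK ?size_poly_gt0 //;
  exact: coef_nz_size.
by rewrite -e; apply: leq_add; [apply: mi0|apply: mj0].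
Qed.

Lemma NZ N D (f1 f2 : series) :
  (exists m1, [/\ size m1 = N, all (fun x => x <= D)%N m1 & f1 m1 != 0]) ->
  (exists m2, [/\ size m2 = N, all (fun x => x <= D)%N m2 & f2 m2 != 0]) ->
  exists c : seq int, [/\ size c = N, ev D c f1 != 0 & ev D c f2 != 0].
Proof.
elim: N f1 f2 => [|N IH] f1 f2 [m1 [s1 a1 n1]] [m2 [s2 a2 n2]].
  case: m1 s1 a1 n1 => // _ _ n1; case: m2 s2 a2 n2 => // _ _ n2.
  by exists [::]; rewrite /= !intz.
case: m1 s1 a1 n1 => // i1 m1 [s1] /andP [i1D a1] n1.
case: m2 s2 a2 n2 => // i2 m2 [s2] /andP [i2D a2] n2.
have [cs [sc e1 e2]] := IH (slice f1 i1) (slice f2 i2)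
  (ex_intro _ m1 (And3 s1 a1 n1)) (ex_intro _ m2 (And3 s2 a2 n2)).
pose P1 := \poly_(i < D.+1) ev D cs (slice f1 i).
pose P2 := \poly_(i < D.+1) ev D cs (slice f2 i).
have P1nz : P1 != 0.
  have : P1`_i1 != 0 by rewrite coef_poly ltnS i1D.
  by apply: contraNneq => ->; rewrite coef0.
have P2nz : P2 != 0.
  have : P2`_i2 != 0 by rewrite coef_poly ltnS i2D.
  by apply: contraNneq => ->; rewrite coef0.
have [x hx] := exists_nonroot (mulf_neq0 P1nz P2nz).
rewrite hornerM mulf_eq0 negb_or in hx; case/andP: hx => h1 h2.
have E1 : ev D (x :: cs) f1 = P1.[x].
  by rewrite /= horner_poly; apply: eq_bigr => i _; rewrite mulrC.
have E2 : ev D (x :: cs) f2 = P2.[x].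
  by rewrite /= horner_poly; apply: eq_bigr => i _; rewrite mulrC.
by exists (x :: cs); rewrite E1 E2 /= sc.
Qed.

Lemma sumn_le_all m : all (fun x => x <= sumn m)%N m.
Proof.
elim: m => //= x m IH; rewrite leq_addr /=.
by apply/allP => y yin; apply: leq_trans (allP IH y yin) _; rewrite leq_addl.
Qed.

Lemma sumn_compo m : sumn (compo m) = sumn m.
Proof. by elim: m => //= x m IH; rewrite /compo /=; case: x => //= x; rewrite -IH. Qed.

Lemma homog_M alpha : homog (Mqs alpha) (sumn alpha).
Proof. by move=> m; rewrite /Mqs; case: (compo m =P alpha) => // <- _; rewrite sumn_compo. Qed.

Definition Pc D B (c : seq int) f : {poly int} := \poly_(d < B) ev D c (hom d f).

Lemma Pc_horner D B c f l : (forall m, (B <= sumn m)%N -> f m = 0) ->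
  (Pc D B c f).[l] = ev D (map (fun x => l * x) c) f.
Proof.
move=> Hf; rewrite horner_poly (ev_decomp _ _ Hf); apply: eq_bigr => d _.
by rewrite (ev_scale _ _ _ (@homog_hom d f)) mulrC.
Qed.

Lemma hom_pair alpha g h dg dh : degle g dg -> degle h dh ->
  mulS g h = Mqs alpha -> forall m1 m2, size m1 = size m2 ->
  g m1 != 0 -> h m2 != 0 -> (sumn m1 + sumn m2 = sumn alpha)%N.
Proof.
move=> Hg Hh E m1 m2 sz n1 n2.
pose D := (dg + dh)%N.
have d1 : (sumn m1 <= dg)%N.
  by rewrite leqNgt; apply: contra n1 => h1; rewrite Hg.
have d2 : (sumn m2 <= dh)%N.
  by rewrite leqNgt; apply: contra n2 => h1; rewrite Hh.
have a1 : all (fun x => x <= D)%N m1.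
  by apply/allP => x xin; apply: leq_trans (allP (sumn_le_all m1) x xin) _; lia.
have a2 : all (fun x => x <= D)%N m2.
  by apply/allP => x xin; apply: leq_trans (allP (sumn_le_all m2) x xin) _; lia.
have h1 : hom (sumn m1) g m1 != 0 by rewrite /hom eqxx.
have h2 : hom (sumn m2) h m2 != 0 by rewrite /hom eqxx.
have [c [sc e1 e2]] := @NZ (size m1) D (hom (sumn m1) g) (hom (sumn m2) h)
  (ex_intro _ m1 (And3 erefl a1 h1))
  (ex_intro _ m2 (And3 (esym sz) a2 h2)).
pose PG := Pc D D.+1 c g; pose PH := Pc D D.+1 c h.
have HgB : forall m, (D.+1 <= sumn m)%N -> g m = 0 by move=> m hm; apply: Hg; lia.
have HhB : forall m, (D.+1 <= sumn m)%N -> h m = 0 by move=> m hm; apply: Hh; lia.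
have E2 : PG * PH = (ev D c (Mqs alpha))%:P * 'X^(sumn alpha).
  apply: poly_eq_int => l.
  rewrite hornerM !Pc_horner // -(@ev_mul _ D _ g h dg dh Hg Hh (leqnn _)) E.
  by rewrite hornerCM hornerXn (ev_scale _ _ _ (@homog_M alpha)) mulrC.
apply: (mono_lemma E2).
  by rewrite coef_poly ltnS ifT //; lia.
by rewrite coef_poly ltnS ifT //; lia.
Qed.

Section Fp.
Variable p : nat.
Hypothesis pr : prime p.

Lemma pchar_polyFp : p \in [pchar {poly 'F_p}].
Proof. by rewrite pchar_poly; apply: pchar_Fp. Qed.

Lemma ev_MX D j bs : all (fun b => 0 < b <= D)%N bs -> (size bs < p)%N ->
  ev D (nseq j 'X ++ nseq p 1 : seq {poly 'F_p}) (Mqs bs)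
    = ('C(j, size bs))%:R * 'X^(sumn bs).
Proof.
elim: j bs => [|j IH] bs Hb Hs.
  rewrite [nseq 0 _ ++ _]/= ev_Mones //.
  case: bs Hb Hs => [|b bs] Hb Hs; first by rewrite bin0 expr0 mulr1.
  rewrite bin0n mul0r; apply/eqP; rewrite -(dvdn_pcharf pchar_polyFp).
  by apply: prime_dvd_bin => //; rewrite /=; lia.
case: bs Hb Hs => [|b bs] Hb Hs.
  by rewrite ev_M0 bin0 expr0 mulr1.
case/andP: (Hb) => hb Hb'.
rewrite [nseq _ _ ++ _]/= (@ev_Mcons _ D 'X _ b bs hb) IH // IH //; last by rewrite /= in Hs; lia.
by rewrite /= binS natrD exprD; ring.
Qed.

End Fp.

Lemma prime_dvd_fact_le p m : prime p -> (p %| m`!)%N -> (p <= m)%N.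
Proof.
move=> pr; elim: m => [|m IH] /=.
  by rewrite fact0 dvdn1 => /eqP e; move: pr; rewrite e.
rewrite factS Euclid_dvdM // => /orP [h|h]; first exact: dvdn_leq.
by apply: leq_trans (IH h) _.
Qed.

Lemma bin_sq p k : prime p -> (0 < k < p)%N -> ~~ (p * p %| 'C(p, k))%N.
Proof.
move=> pr /andP [k0 kp]; apply/negP => H.
have H2 : (p * p %| p`!)%N.
  by rewrite -(bin_fact (ltnW kp)); apply: dvdn_mulr.
have p0 := prime_gt0 pr.
have ef : p`! = (p * (p.-1)`!)%N by rewrite -{1}(prednK p0) factS prednK.
rewrite ef dvdn_pmul2l // in H2.
have := prime_dvd_fact_le pr H2; lia.
Qed.

Lemma homog_degle f d : homog f d -> degle f d.
Proof. by move=> H m hm; apply/eqP; apply: contraT => /H e; lia. Qed.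

Lemma eisen alpha g h a b (p : nat) : prime p -> (size alpha < p)%N ->
  is_composition alpha -> homog g a -> homog h b -> (a + b = sumn alpha)%N ->
  mulS g h = Mqs alpha -> a = 0%N \/ b = 0%N.
Proof.
move=> pr kp /andP [anz apos] Hg Hh ab E.
set k := size alpha; set n := sumn alpha.
have valid : all (fun x => 0 < x <= n)%N alpha.
  apply/allP => x xin; rewrite (allP apos x xin) /=; exact: (allP (sumn_le_all alpha) x xin).
pose cs : seq {poly 'F_p} := nseq k 'X ++ nseq p 1.
have csz : all (fun c : {poly 'F_p} => size c <= 2)%N cs.
  by rewrite all_cat !all_nseq size_polyX size_poly1 !orbT.
pose G := ev n cs g; pose H := ev n cs h.
have EGH : G * H = 1%:P * 'X^n.
  rewrite -(@ev_mul _ n cs g h a b (homog_degle Hg) (homog_degle Hh)); last by lia.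
  by rewrite E ev_MX // binn polyC1.
have szG : (size G <= a.+1)%N := ev_size n csz (homog_degle Hg).
have szH : (size H <= b.+1)%N := ev_size n csz (homog_degle Hh).
case: (posnP a) => [->|apos']; first by left.
case: (posnP b) => [->|bpos]; first by right.
exfalso.
have GH0 : G * H != 0 by rewrite EGH polyC1 mul1r -size_poly_eq0 size_polyXn.
have G0 : G != 0 by apply: contraNneq GH0 => ->; rewrite mul0r.
have H0 : H != 0 by apply: contraNneq GH0 => ->; rewrite mulr0.
have Gc : G`_0 = 0.
  apply/eqP; apply: contraT => nz.
  have lc : H`_(size H).-1 != 0 by rewrite -lead_coefE lead_coef_eq0.
  have := mono_lemma EGH nz lc; lia.
have Hc : H`_0 = 0.
  apply/eqP; apply: contraT => nz.
  have lc : G`_(size G).-1 != 0 by rewrite -lead_coefE lead_coef_eq0.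
  have := mono_lemma EGH lc nz; lia.
pose cs0 : seq int := nseq k 0 ++ nseq p 1.
have mapcs : map (horner_eval (0 : 'F_p)) cs = map (intr : int -> 'F_p) cs0.
  by rewrite /cs /cs0 !map_cat !map_nseq /= /horner_eval hornerX hornerC rmorph0 rmorph1.
have eG : horner_eval (0 : 'F_p) G = ((ev n cs0 g)%:~R : 'F_p).
  by rewrite /G ev_rmorph mapcs -ev_rmorph.
have eH : horner_eval (0 : 'F_p) H = ((ev n cs0 h)%:~R : 'F_p).
  by rewrite /H ev_rmorph mapcs -ev_rmorph.
rewrite /horner_eval horner_coef0 Gc in eG; rewrite /horner_eval horner_coef0 Hc in eH.
have g0 : (p %| ev n cs0 g)%Z by rewrite (dvdz_pcharf (pchar_Fp pr)) -eG.
have h0 : (p %| ev n cs0 h)%Z by rewrite (dvdz_pcharf (pchar_Fp pr)) -eH.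
have prod : ev n cs0 g * ev n cs0 h = 'C(p, k)%:R.
  rewrite -(@ev_mul _ n cs0 g h a b (homog_degle Hg) (homog_degle Hh)); last by lia.
  by rewrite E /cs0 ev_Mzeros // ev_Mones.
have := dvdz_mul g0 h0; rewrite prod natz -PoszM => /= hd.
have k0 : (0 < k)%N by rewrite /k; case: (alpha) anz.
have := bin_sq pr (_ : 0 < k < p)%N; rewrite k0 kp => /(_ isT) /negP; apply; exact: hd.
Qed.

Lemma pad f m j : wf_series f -> f (m ++ nseq j 0%N) = f m.
Proof.
move=> wf; elim: j => [|j IH]; first by rewrite cats0.
have e : nseq j.+1 0%N = rcons (nseq j 0%N) 0%N by elim: j {IH} => //= j ->.
by rewrite e -rcons_cat wf.
Qed.

Lemma sumn_eq0_nseq m : sumn m = 0%N -> m = nseq (size m) 0%N.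
Proof. elim: m => //= x m IH e; have [-> s0] : x = 0%N /\ sumn m = 0%N by lia. by congr (_ :: _); apply: IH. Qed.

Lemma divs_zero (F : seq nat -> int) s :
  \sum_(t <- divs s) (if sumn t == 0%N then F t else 0) = F (nseq (size s) 0%N).
Proof.
elim: s F => [|x s IH] F; first by rewrite /= big_seq1.
have -> : divs (x :: s) = [seq j :: t | j <- iota 0 x.+1, t <- divs s] by [].
rewrite big_allpairs_dep /= big_cons.
rewrite (eq_bigr (fun t => if sumn t == 0%N then F (0%N :: t) else 0)); last first.
  by move=> t _; rewrite add0n.
rewrite IH big1_seq ?addr0 // => j /andP [_ jin]; apply: big1 => t _.
by rewrite ifF //; move: jin; rewrite mem_iota; lia.
Qed.

Lemma subm_zero s : subm s (nseq (size s) 0%N) = s.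
Proof. by elim: s => //= x s IH; rewrite /subm /= subn0; congr (_ :: _). Qed.

Lemma mulS_const_l g h (c : int) s :
  (forall m, g m = if sumn m == 0%N then c else 0) -> mulS g h s = c * h s.
Proof.
move=> Hc; rewrite /mulS.
rewrite (eq_bigr (fun t => if sumn t == 0%N then c * h (subm s t) else 0)).
  by rewrite divs_zero subm_zero.
by move=> t _; rewrite Hc; case: ifP => _; rewrite ?mul0r.
Qed.

Lemma hom_global alpha g h : inK g -> inK h -> mulS g h = Mqs alpha ->
  forall m1 m2, g m1 != 0 -> h m2 != 0 -> (sumn m1 + sumn m2 = sumn alpha)%N.
Proof.
move=> [wg [dg Hg]] [wh [dh Hh]] E m1 m2 n1 n2.
pose N := maxn (size m1) (size m2).
have := @hom_pair alpha g h dg dh Hg Hh E (m1 ++ nseq (N - size m1) 0%N)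
   (m2 ++ nseq (N - size m2) 0%N).
rewrite !size_cat !size_nseq !pad // !sumn_cat !sumn_nseq !mul0n !addn0.
apply; rewrite // /N; lia.
Qed.

Lemma int_sq1 (c x : int) : c * x = 1 -> c * c = 1.
Proof.
rewrite mulrC => /intUnitRing.unitzPl; rewrite qualifE => /orP [] /eqP -> //.
Qed.

Definition const_unit (f : series) :=
  exists c : int, c * c = 1 /\ forall m, f m = if sumn m == 0%N then c else 0.

Lemma compo_id alpha : is_composition alpha -> compo alpha = alpha.
Proof. by case/andP => _ H; rewrite /compo; apply/all_filterP; apply: sub_all H => x; lia. Qed.

Lemma main_factor alpha g h : is_composition alpha -> inK g -> inK h ->
  (forall s, mulS g h s = Mqs alpha s) -> const_unit g \/ const_unit h.
Proof.
move=> ac Kg Kh E'; have E := functional_extensionality _ _ E'.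
have M1 : mulS g h alpha = 1 by rewrite E /Mqs compo_id // eqxx.
have [t nzg nzh] : exists2 t, g t != 0 & h (subm alpha t) != 0.
  case: (boolP (has (fun t => g t * h (subm alpha t) != 0) (divs alpha))).
    by case/hasP => t _; rewrite mulf_eq0 negb_or => /andP [] ; exists t.
  move/hasPn => hn; exfalso; move: M1; rewrite /mulS big1_seq //.
  by move=> t /andP [_ tin]; have := hn t tin; rewrite negbK => /eqP.
set a := sumn t; set b := sumn (subm alpha t).
have ab : (a + b = sumn alpha)%N by apply: (hom_global Kg Kh E).
have Hg : homog g a.
  by move=> m nz; have := hom_global Kg Kh E nz nzh; rewrite -/b; lia.
have Hh : homog h b.
  by move=> m nz; have := hom_global Kg Kh E nzg nz; rewrite -/a; lia.
have [p kp pr] := prime_above (size alpha).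
have cst : forall f d, wf_series f -> homog f d -> d = 0%N ->
    forall m, f m = if sumn m == 0%N then f [::] else 0.
  move=> f d wf Hf d0 m; case: ifP => [/eqP s0|s0].
    by rewrite (sumn_eq0_nseq s0) -[nseq _ _]cat0s pad.
  by apply/eqP; apply: contraFT s0 => /Hf ->; rewrite d0.
pose cs1 : seq int := nseq (size alpha) 1.
have valid : all (fun x => 0 < x <= sumn alpha)%N alpha.
  case/andP: ac => _ apos.
  apply/allP => x xin; rewrite (allP apos x xin) /=; exact: (allP (sumn_le_all alpha) x xin).
have prod : ev (sumn alpha) cs1 g * ev (sumn alpha) cs1 h = 1.
  rewrite -(@ev_mul _ (sumn alpha) cs1 g h a b (homog_degle Hg) (homog_degle Hh)); last by lia.
  by rewrite E ev_Mones // binn.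
case: (eisen pr kp ac Hg Hh ab E) => [a0|b0].
  left; exists (g [::]); split; last exact: (cst g a Kg.1 Hg a0).
  rewrite (ev_const _ _ (cst g a Kg.1 Hg a0)) intz in prod.
  exact: int_sq1 prod.
right; exists (h [::]); split; last exact: (cst h b Kh.1 Hh b0).
rewrite (ev_const _ _ (cst h b Kh.1 Hh b0)) intz in prod.
by apply: (@int_sq1 _ (ev (sumn alpha) cs1 g)); rewrite mulrC.
Qed.

Lemma inK_M alpha : inK (Mqs alpha).
Proof.
split.
  by move=> s; rewrite /Mqs /compo filter_rcons /=.
exists (sumn alpha) => s hs; rewrite /Mqs; case: eqP => // e.
by move: hs; rewrite -e sumn_compo ltnn.
Qed.

Lemma inQSym_M alpha : inQSym (Mqs alpha).
Proof. by split; [exact: inK_M | move=> s t e; rewrite /Mqs e]. Qed.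

Lemma irr_gen (P : series -> Prop) alpha : is_composition alpha ->
  P (Mqs alpha) -> (forall f, P f -> inK f) -> irreducible_in P (Mqs alpha).
Proof.
move=> ac PM PK; split => //.
- by exists alpha; rewrite /Mqs compo_id // eqxx.
- move=> [g' [_ H]]; have := H [::]; rewrite mulS_nil /oneS /= /Mqs /=.
  have -> : ([::] == alpha) = false by case/andP: ac; rewrite eq_sym => /negbTE.
  by rewrite mul0r.
- move=> g h Pg Ph E.
  have cu : forall f, P f -> const_unit f -> unit_in P f.
    move=> f Pf [c [cc Hc]]; exists f; split => // s.
    by rewrite (mulS_const_l _ _ Hc) Hc /oneS; case: ifP => _; rewrite ?mulr0.
  by case: (main_factor ac (PK _ Pg) (PK _ Ph) E) => H; [left|right]; apply: cu.
Qed.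

Theorem proposition8p10 (alpha : seq nat) :
  is_composition alpha ->
  irreducible_in inQSym (Mqs alpha) /\ irreducible_in inK (Mqs alpha).
Proof.
move=> ac; split; apply: irr_gen => //; [exact: inQSym_M | by move=> f [] | exact: inK_M].
Qed.
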